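(* Let $(A,\cdot,\alpha)$ be a Hom-Malcev algebra over a field $\mathbb{K}$ of characteristic $0$, and define for $w,x,y,z\in A$ $$G(w,x,y,z)=J_{\alpha}(w\cdot x,\alpha(y),\alpha(z))-\alpha^{2}(x)\cdot J_{\alpha}(w,y,z)-J_{\alpha}(x,y,z)\cdot\alpha^{2}(w).$$ Then for all $w,x,y,z\in A$, $$G(w,x,y,z)=2\big[J_{\alpha}(w\cdot x,\alpha(y),\alpha(z))+J_{\alpha}(y\cdot z,\alpha(w),\alpha(x))\big].$$
   Context: A multiplicative Hom-algebra is a triple $(A,\cdot,\alpha)$ with $A$ a vector space over $\mathbb{K}$, $\cdot$ bilinear, and $\alpha$ linear with $\alpha(x\cdot y)=\alpha(x)\cdot\alpha(y)$; anticommutative means $x\cdot y=-y\cdot x$. The Hom-Jacobian is $J_{\alpha}(x,y,z)=(x\cdot y)\cdot\alpha(z)+(y\cdot z)\cdot\alpha(x)+(z\cdot x)\cdot\alpha(y)$. A Hom-Malcev algebra is an anticommutative multiplicative Hom-algebra satisfying $J_{\alpha}(\alpha(x),\alpha(y),x\cdot z)=J_{\alpha}(x,y,z)\cdot\alpha^{2}(x)$ for all $x,y,z\in A$. *)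

(* Defs.v *)
From mathcomp Require Import all_boot all_algebra.
Set Implicit Arguments. Unset Strict Implicit. Unset Printing Implicit Defensive.
Import GRing.Theory.
Local Open Scope ring_scope.

Definition bilinear_mul (F : fieldType) (A : lmodType F) (mul : A -> A -> A) :=
  (forall a x y z, mul (a *: x + y) z = a *: mul x z + mul y z) /\
  (forall a x y z, mul x (a *: y + z) = a *: mul x y + mul x z).

Definition linear_map (F : fieldType) (A : lmodType F) (alpha : A -> A) :=
  forall a x y, alpha (a *: x + y) = a *: alpha x + alpha y.

Definition multiplicative (A : Type) (mul : A -> A -> A) (alpha : A -> A) :=
  forall x y, alpha (mul x y) = mul (alpha x) (alpha y).

Definition anticommutative (A : zmodType) (mul : A -> A -> A) :=
  forall x y, mul x y = - mul y x.

Definition homJ (A : zmodType) (mul : A -> A -> A) (alpha : A -> A) x y z :=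
  mul (mul x y) (alpha z) + mul (mul y z) (alpha x) + mul (mul z x) (alpha y).

Definition hom_malcev (F : fieldType) (A : lmodType F)
    (mul : A -> A -> A) (alpha : A -> A) :=
  [/\ bilinear_mul mul, linear_map alpha, multiplicative mul alpha,
      anticommutative mul &
      forall x y z, homJ mul alpha (alpha x) (alpha y) (mul x z)
                    = mul (homJ mul alpha x y z) (alpha (alpha x))].

Definition homG (A : zmodType) (mul : A -> A -> A) (alpha : A -> A) w x y z :=
  homJ mul alpha (mul w x) (alpha y) (alpha z)
  - mul (alpha (alpha x)) (homJ mul alpha w y z)
  - mul (homJ mul alpha x y z) (alpha (alpha w)).

(* Main.v *)
Require Import Defs.
From mathcomp Require Import all_boot all_algebra.
Import GRing.Theory.
Local Open Scope ring_scope.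

Inductive zx := Zat of nat | Zadd of zx & zx | Zopp of zx | Z0 | Zmn of zx & nat.

Section Refl.
Variable V : zmodType.
Variable env : seq V.
Fixpoint zev (e : zx) : V :=
  match e with
  | Zat n => nth 0 env n
  | Zadd a b => zev a + zev b
  | Zopp a => - zev a
  | Z0 => 0
  | Zmn a k => zev a *+ k
  end.
Fixpoint zco (e : zx) (i : nat) : int :=
  match e with
  | Zat n => ((n == i) : nat)%:Z
  | Zadd a b => zco a i + zco b i
  | Zopp a => - zco a i
  | Z0 => 0
  | Zmn a k => zco a i * k%:Z
  end.
Fixpoint zbnd (N : nat) (e : zx) : bool :=
  match e with
  | Zat n => (n < N)%N
  | Zadd a b => zbnd N a && zbnd N b
  | Zopp a => zbnd N a
  | Z0 => true
  | Zmn a k => zbnd N a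
  end.
Lemma zev_sum N e : zbnd N e -> zev e = \sum_(i < N) nth 0 env i *~ zco e i.
Proof.
elim: e => [n|a IHa b IHb|a IHa||a IHa k] /=.
- move=> hn; rewrite (bigD1 (Ordinal hn)) //= eqxx /= big1 ?addr0 //.
  by move=> i; rewrite -val_eqE /= eq_sym => /negbTE ->.
- by case/andP=> /IHa -> /IHb ->; rewrite -big_split /=; apply: eq_bigr => i _; rewrite mulrzDr.
- by move/IHa ->; rewrite -sumrN; apply: eq_bigr => i _; rewrite mulrNz.
- by move=> _; rewrite big1 // => i _; rewrite mulr0z.
- by move/IHa ->; rewrite -sumrMnl; apply: eq_bigr => i _; rewrite mulrzA -pmulrn.
Qed.
Lemma zeq_sound N e1 e2 :
  zbnd N e1 && zbnd N e2 && all (fun i => zco e1 i == zco e2 i) (iota 0 N) ->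
  zev e1 = zev e2.
Proof.
case/andP=> /andP[b1 b2] /allP h.
rewrite (zev_sum _ _ b1) (zev_sum _ _ b2); apply: eq_bigr => i _.
by rewrite (eqP (h i _)) // mem_iota /= add0n ltn_ord.
Qed.
End Refl.

Ltac zlen l := lazymatch l with
  | nil => constr:(0%N) | _ :: ?l' => let n := zlen l' in constr:(S n) end.
Ltac zfind x l := lazymatch l with
  | x :: _ => constr:(0%N)
  | _ :: ?l' => let n := zfind x l' in constr:(S n) end.
Ltac zreify t env := 
  lazymatch t with
  | ?a + ?b => let r := zreify a env in lazymatch r with (?ea, ?env1) =>
               let r2 := zreify b env1 in lazymatch r2 with (?eb, ?env2) =>
               constr:((Zadd ea eb, env2)) end end
  | - ?a => let r := zreify a env in lazymatch r with (?ea, ?env1) =>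
               constr:((Zopp ea, env1)) end
  | 0 => constr:((Z0, env))
  | ?a *+ ?k => let r := zreify a env in lazymatch r with (?ea, ?env1) =>
               constr:((Zmn ea k, env1)) end
  | _ => match constr:(0%N) with
         | _ => let n := zfind t env in constr:((Zat n, env))
         | _ => let n := zlen env in let env' := eval cbv [cat] in (env ++ [:: t]) in
                constr:((Zat n, env'))
         end
  end.
Ltac zsolve := lazymatch goal with
  | |- @eq ?V ?l ?r =>
    let r1 := zreify l (@nil V) in lazymatch r1 with (?el, ?env1) =>
    let r2 := zreify r env1 in lazymatch r2 with (?er, ?env2) =>
    let N := zlen env2 in
    apply: (@zeq_sound V env2 N el er); vm_compute; reflexivity end end
  end.


Definition hexpr (A : zmodType) (mul : A -> A -> A) (alpha : A -> A) u c d :=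
  homJ mul alpha (alpha u) (alpha c) (mul u d)
  - mul (homJ mul alpha u c d) (alpha (alpha u)).
Arguments hexpr {A}.

Theorem lemma2p7 (F : fieldType) (A : lmodType F)
    (mul : A -> A -> A) (alpha : A -> A) :
  [pchar F] =i pred0 ->
  hom_malcev mul alpha ->
  forall w x y z : A,
    homG mul alpha w x y z =
    2%:R *: (homJ mul alpha (mul w x) (alpha y) (alpha z)
             + homJ mul alpha (mul y z) (alpha w) (alpha x)).
Proof.
move=> hc [[mDl mDr] aL aM aC Hm] w x y z.
have aM' : forall a b, alpha (mul a b) = mul (alpha a) (alpha b) := aM.
have aC' : forall a b, mul a b = - mul b a := aC.
have mD1 : forall a b c, mul (a + b) c = mul a c + mul b c.
  by move=> a b c; have := mDl 1 a b c; rewrite !scale1r.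
have mD2 : forall a b c, mul c (a + b) = mul c a + mul c b.
  by move=> a b c; have := mDr 1 c a b; rewrite !scale1r.
have m01 : forall c, mul 0 c = 0.
  move=> c; have := mD1 0 0 c; rewrite addr0 => h.
  by have := congr1 (fun t => t - mul 0 c) h; rewrite subrr addrK.
have m02 : forall c, mul c 0 = 0.
  move=> c; have := mD2 0 0 c; rewrite addr0 => h.
  by have := congr1 (fun t => t - mul c 0) h; rewrite subrr addrK.
have mN1 : forall a c, mul (- a) c = - mul a c.
  by move=> a c; have := mDl (-1) a 0 c; rewrite !addr0 m01 addr0 !scaleN1r.
have mN2 : forall a c, mul c (- a) = - mul c a.
  by move=> a c; have := mDr (-1) c a 0; rewrite !addr0 m02 addr0 !scaleN1r.
have aD : forall a b, alpha (a + b) = alpha a + alpha b.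
  by move=> a b; have := aL 1 a b; rewrite !scale1r.
have a0 : alpha 0 = 0.
  have := aD 0 0; rewrite addr0 => h.
  by have := congr1 (fun t => t - alpha 0) h; rewrite subrr addrK.
have aN : forall a, alpha (- a) = - alpha a.
  by move=> a; have := aL (-1) a 0; rewrite !addr0 a0 addr0 !scaleN1r.
have E : forall u c d, hexpr mul alpha u c d = 0.
  by move=> u c d; rewrite /hexpr Hm subrr.
have key : (homG mul alpha w x y z - (homJ mul alpha (mul w x) (alpha y) (alpha z) + homJ mul alpha (mul y z) (alpha w) (alpha x)) *+ 2) *+ 2 = - (hexpr mul alpha (w + x) y z - hexpr mul alpha w y z - hexpr mul alpha x y z) - (hexpr mul alpha (w + y) x z - hexpr mul alpha w x z - hexpr mul alpha y x z) *+ 2 - (hexpr mul alpha (w + y) z x - hexpr mul alpha w z x - hexpr mul alpha y z x) + (hexpr mul alpha (w + z) x y - hexpr mul alpha w x y - hexpr mul alpha z x y).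
  rewrite /hexpr /homG /homJ.
  repeat progress (rewrite ?mD1 ?mD2 ?mN1 ?mN2 ?m01 ?m02 ?aD ?aN ?a0 ?aM' ?opprK ?opprD ?oppr0 ?(aC' x w) ?(aC' (alpha x) (alpha w)) ?(aC' y w) ?(aC' (alpha y) (alpha w)) ?(aC' y x) ?(aC' (alpha y) (alpha x)) ?(aC' z w) ?(aC' (alpha z) (alpha w)) ?(aC' z x) ?(aC' (alpha z) (alpha x)) ?(aC' z y) ?(aC' (alpha z) (alpha y)) ?(aC' (alpha _) (mul _ _)) ?(aC' (mul (alpha y) (alpha z)) (mul (alpha w) (alpha x))) ?(aC' (mul (alpha x) (alpha z)) (mul (alpha w) (alpha y))) ?(aC' (mul (alpha x) (alpha y)) (mul (alpha w) (alpha z)))).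
  zsolve.
have key2 : (homG mul alpha w x y z - (homJ mul alpha (mul w x) (alpha y) (alpha z) + homJ mul alpha (mul y z) (alpha w) (alpha x)) *+ 2) *+ 2 = 0.
  by rewrite key !E; zsolve.
move: key2; rewrite -scaler_nat => /eqP; rewrite scaler_eq0 => /orP[|].
  by have := (pcharf0P F).1 hc 2; move=> ->.
by rewrite subr_eq0 scaler_nat => /eqP.
Qed.
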